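(* Let $P=v_1v_2\cdots v_\ell$ be a path whose nodes carry bags $B_{v_j}$ such that, for every vertex, the set of nodes whose bags contain it is a contiguous subpath. Let $\{\mu_{B_{v_j}}\}$ be distributions on $B_{v_j}$-assignments whose marginals agree on intersections of bags. Let $v$ be an internal node of $P$ whose two neighbours $u,w$ on $P$ are also internal nodes of $P$ and satisfy $B_v\cap B_w\subseteq B_u$ (here $u$ may precede or follow $v$). Let $P'$ be the path obtained from $P$ by deleting $v$ and adding the edge $\{u,w\}$, and let $B(P')=\bigcup_{x\in V(P')}B_x$. Let $\mathcal A$ be the distribution of the output of SC-Round run on $P$ starting at $v_1$, and $\mathcal A'$ the distribution of the output of SC-Round run on $P'$ starting at $v_1$. Then $\mathcal A'$ equals the restriction (marginal) of $\mathcal A$ to $B(P')$.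
   Context: For a finite set $X$, an $X$-assignment is a map $X\to\{0,1\}$. SC-Round on a path starting at $v_1$: sample $f|_{B_{v_1}}$ from $\mu_{B_{v_1}}$; then for $j=2,3,\dots$ along the path, with previous node $v'$, let $B^+=B_{v_j}\cap B_{v'}$ and $B^-=B_{v_j}\setminus B^+$, and sample $f|_{B^-}$ with $\Pr[f|_{B^-}=g'] = \Pr_{g\sim\mu_{B_{v_j}}}[g|_{B^-}=g'\mid g|_{B^+}=f|_{B^+}]$. The output is the assignment $f$ on the union of all bags. *)

(* Defs.v *)
From mathcomp Require Import all_boot all_order all_algebra.
Set Implicit Arguments. Unset Strict Implicit. Unset Printing Implicit Defensive.
Import Order.TTheory GRing.Theory Num.Theory.
Local Open Scope ring_scope.

Section SC.
Variables (R : realFieldType) (V N : finType).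

(* A (partial) assignment: an X-assignment is an [asg] whose domain is X. *)
Definition asg := {ffun V -> option bool}.

Definition dom (f : asg) : {set V} := [set x | f x != None].

Definition restr (X : {set V}) (f : asg) : asg :=
  [ffun x => if x \in X then f x else None].

Definition marg (X : {set V}) (mu : asg -> R) (g : asg) : R :=
  \sum_(f : asg | restr X f == g) mu f.

Definition is_dist_on (X : {set V}) (mu : asg -> R) : Prop :=
  [/\ forall f, 0 <= mu f, \sum_(f : asg) mu f = 1
    & forall f, mu f != 0 -> dom f = X].

(* Pr_{g ~ mu}[ g|Bm = gm | g|Bp = fp ]  (ratio is 0 if the conditioning
   event has probability 0, which never happens with positive probability) *)
Definition condPr (mu : asg -> R) (Bp Bm : {set V}) (fp gm : asg) : R :=
  (\sum_(g : asg | (restr Bm g == gm) && (restr Bp g == fp)) mu g) /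
  (\sum_(g : asg | restr Bp g == fp) mu g).

Definition merge (h g' : asg) : asg :=
  [ffun x => if g' x is Some b then Some b else h x].

Variables (B : N -> {set V}) (mu : N -> asg -> R).

Definition scStep (A : asg -> R) (v' x : N) (f : asg) : R :=
  let Bp := B x :&: B v' in
  let Bm := B x :\: Bp in
  \sum_(h : asg) \sum_(g' : asg | dom g' == Bm)
     (if f == merge h g' then A h * condPr (mu x) Bp Bm (restr Bp h) g' else 0).

Fixpoint scRest (A : asg -> R) (prev : N) (rest : seq N) : asg -> R :=
  match rest with
  | [::] => A
  | x :: r => scRest (scStep A prev x) x r
  end.

Definition scRound (s : seq N) : asg -> R :=
  match s with
  | [::] => fun _ => 0
  | x :: r => scRest (mu x) x r
  end.

End SC.

(* Main.v *)
Require Import Defs.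
From mathcomp Require Import all_boot all_order all_algebra.
From Stdlib Require Import FunctionalExtensionality.
Import Order.TTheory GRing.Theory Num.Theory.
Local Open Scope ring_scope.

Set Implicit Arguments. Unset Strict Implicit. Unset Printing Implicit Defensive.

Section Basics.
Variables (R : realFieldType) (V : finType).
Implicit Types (X Y : {set V}) (f g h : asg V).
Local Notation mrg := (@Defs.merge V).

Lemma restrE X f x : restr X f x = if x \in X then f x else None.
Proof. by rewrite ffunE. Qed.
Lemma mergeE h g x : mrg h g x = if g x is Some b then Some b else h x.
Proof. by rewrite ffunE. Qed.
Lemma in_dom f x : (x \in dom f) = (f x != None).
Proof. by rewrite inE. Qed.
Lemma eq_asgE f g : (f == g) = [forall x, f x == g x].
Proof. by apply/eqP/forallP => [-> //| H]; apply/ffunP => x; apply/eqP. Qed.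
Lemma eq_domE f X : (dom f == X) = [forall x, (f x != None) == (x \in X)].
Proof.
apply/idP/idP => [/eqP <-|/forallP H]; first by apply/forallP => x; rewrite in_dom.
apply/eqP/setP => x; rewrite in_dom; exact: (eqP (H x)).
Qed.
Lemma forall_andb (T : finType) (P Q : pred T) :
  [forall x, P x] && [forall x, Q x] = [forall x, P x && Q x].
Proof.
apply/andP/forallP => [[/forallP H1 /forallP H2] x|H]; first by rewrite H1 H2.
by split; apply/forallP => x; case/andP: (H x).
Qed.

Lemma sum_if_eq (I : finType) (P : pred I) (m : I) (F : I -> R) :
  \sum_(i | P i) (if i == m then F i else 0) = if P m then F m else 0.
Proof.
case Pm: (P m).
  rewrite (bigD1 m) //= eqxx big1 ?addr0 // => i /andP[_ /negbTE ->] //.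
by rewrite big1 // => i Pi; case: eqP => // e; rewrite -e Pi in Pm.
Qed.
Lemma sum_if_eq' (I : finType) (P : pred I) (m : I) (F : I -> R) :
  \sum_(i | P i) (if m == i then F i else 0) = if P m then F m else 0.
Proof. by rewrite -sum_if_eq; apply: eq_bigr => i _; rewrite eq_sym. Qed.

Lemma eq_bigl_nz (I : finType) (F : I -> R) (P Q : pred I) :
  (forall i, F i != 0 -> P i = Q i) ->
  \sum_(i | P i) F i = \sum_(i | Q i) F i.
Proof.
move=> H; rewrite big_mkcond [RHS]big_mkcond; apply: eq_bigr => i _.
have [->|/H ->] := eqVneq (F i) 0; last by [].
by case: (P i); case: (Q i).
Qed.

Lemma restr_restr X Y h : Y \subset X -> restr Y (restr X h) = restr Y h.
Proof.
move=> /subsetP s; apply/ffunP => x; rewrite !restrE.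
by case: ifP => // /s ->.
Qed.
Lemma restr_merge X h g : dom g \subset X -> restr X (mrg h g) = mrg (restr X h) g.
Proof.
move=> /subsetP s; apply/ffunP => x; rewrite !restrE !mergeE restrE.
case: ifP => // xX; case E: (g x) => //.
by have := s x; rewrite in_dom E xX => /(_ isT).
Qed.
Lemma restr_id X f : dom f \subset X -> restr X f = f.
Proof.
move=> /subsetP s; apply/ffunP => x; rewrite !restrE.
case: ifP => // xX; case E: (f x) => //.
by have := s x; rewrite in_dom E xX => /(_ isT).
Qed.

End Basics.
Section Basics2.
Variables (R : realFieldType) (V : finType).
Implicit Types (X Y : {set V}) (f g h : asg V).
Local Notation mrg := (@Defs.merge V).
Lemma dom_restr X f : dom (restr X f) = X :&: dom f.
Proof. by apply/setP => x; rewrite !inE ffunE; case: (x \in X). Qed.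
Lemma restr_merge_disj X h g : (forall y, y \in dom g -> y \notin X) -> restr X (mrg h g) = restr X h.
Proof.
move=> D; apply/ffunP => x; rewrite !restrE mergeE.
case: ifP => // xX; case E: (g x) => //.
by have := D x; rewrite in_dom E xX => /(_ isT).
Qed.
End Basics2.

Section Steps.
Variables (R : realFieldType) (V N : finType).
Variables (B : N -> {set V}) (mu : N -> asg V -> R).
Implicit Types (X Y : {set V}) (f g h : asg V) (A : asg V -> R).
Local Notation mrg := (@Defs.merge V).
Local Notation c x p h g := (condPr (mu x) (B x :&: B p) (B x :\: (B x :&: B p))
   (restr (B x :&: B p) h) g).

Lemma if_mul (b : bool) (a z : R) : (if b then a else 0) * z = if b then a * z else 0.
Proof. by case: b; rewrite ?mul0r. Qed.

Lemma mul_if1 (b : bool) (z : R) : z * (if b then 1 else 0) = if b then z else 0.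
Proof. by case: b; rewrite ?mulr1 ?mulr0. Qed.

Lemma sum_scStep A p x (Phi : asg V -> R) :
  \sum_f scStep B mu A p x f * Phi f =
  \sum_h A h * \sum_(g' | dom g' == B x :\: (B x :&: B p)) c x p h g' * Phi (mrg h g').
Proof.
rewrite /scStep /=.
under eq_bigr do rewrite mulr_suml.
rewrite exchange_big /=; apply: eq_bigr => h _.
under eq_bigr do rewrite mulr_suml.
rewrite exchange_big /= mulr_sumr; apply: eq_bigr => g' _.
under eq_bigr do rewrite if_mul.
by rewrite sum_if_eq mulrA.
Qed.

Lemma marg_sum X (F : asg V -> R) G : marg X F G = \sum_f F f * (if restr X f == G then 1 else 0).
Proof.
by rewrite /marg big_mkcond; apply: eq_bigr => f _; case: ifP; rewrite ?mulr1 ?mulr0.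
Qed.

Lemma pt_sum (F : asg V -> R) G : F G = \sum_f F f * (if f == G then 1 else 0).
Proof.
under eq_bigr do rewrite mul_if1.
by rewrite sum_if_eq.
Qed.

Lemma marg_scStep X A p x : B x \subset X ->
  marg X (scStep B mu A p x) =1 scStep B mu (marg X A) p x.
Proof.
move=> sx G; rewrite marg_sum sum_scStep [RHS]pt_sum sum_scStep.
under [RHS]eq_bigr do rewrite /marg mulr_suml.
rewrite (partition_big (fun h => restr X h) xpredT) //=.
apply: eq_bigr => j _; apply: eq_bigr => h /eqP <-; congr (_ * _).
apply: eq_bigr => g /eqP dg.
rewrite restr_restr ?restr_merge //; first by rewrite dg subDset subsetU // sx orbT.
by rewrite (subset_trans (subsetIl _ _) sx).
Qed.


Lemma scRest_cat A p s t :
  scRest B mu A p (s ++ t) = scRest B mu (scRest B mu A p s) (last p s) t.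
Proof. by elim: s A p => //= y s IH A p; rewrite IH. Qed.

Lemma marg_scRest X s A p : (forall y, y \in s -> B y \subset X) ->
  marg X (scRest B mu A p s) =1 scRest B mu (marg X A) p s.
Proof.
elim: s A p => //= y s IH A p Hs G.
rewrite IH; last by move=> z zs; apply: Hs; rewrite inE zs orbT.
have -> // : marg X (scStep B mu A p y) = scStep B mu (marg X A) p y.
by apply: functional_extensionality; apply: marg_scStep; apply: Hs; rewrite inE eqxx.
Qed.

Lemma marg_dist X x : is_dist_on (B x) (mu x) -> B x \subset X ->
  marg X (mu x) =1 mu x.
Proof.
move=> [_ _ Hd] sX G; rewrite /marg.
rewrite (@eq_bigl_nz _ _ _ _ (fun f : asg V => f == G)); first by rewrite big_pred1_eq.
by move=> f /Hd df; rewrite restr_id // df.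
Qed.

Definition good p A := forall h, A h != 0 -> mu p (restr (B p) h) != 0.

Lemma good_step A p x : is_dist_on (B x) (mu x) -> good x (scStep B mu A p x).
Proof.
move=> [_ _ Hd] f; apply: contraNN => /eqP H0.
rewrite /scStep; apply/eqP; rewrite big1 // => h _; rewrite big1 // => g' /eqP dg.
case: eqP => // ef.
rewrite /condPr big1 ?mul0r ?mulr0 // => g /andP[/eqP e1 /eqP e2].
have [//|/Hd dg0] := eqVneq (mu x g) 0.
suff E : restr (B x) f = g by rewrite E in H0.
apply/ffunP => y; rewrite ef restrE mergeE.
move: (congr1 (fun k : asg V => k y) e1) (congr1 (fun k : asg V => k y) e2) (congr1 (fun S : {set V} => y \in S) dg0).
rewrite !restrE !in_dom !inE.
case: (y \in B x); case: (y \in B p); case: (g y) => [[]|]; case: (h y) => [[]|];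
  case: (g' y) => [[]|] //=.
Qed.

Lemma condPr_sum1 x (Bp : {set V}) (fp : asg V) : is_dist_on (B x) (mu x) -> Bp \subset B x ->
  marg Bp (mu x) fp != 0 ->
  \sum_(g' | dom g' == B x :\: Bp) condPr (mu x) Bp (B x :\: Bp) fp g' = 1.
Proof.
move=> [_ _ Hd] sB; rewrite /condPr /marg -mulr_suml => nz.
suff -> : \sum_(g' | dom g' == B x :\: Bp)
     \sum_(g | (restr (B x :\: Bp) g == g') && (restr Bp g == fp)) mu x g =
   \sum_(g | restr Bp g == fp) mu x g by rewrite divff.
under eq_bigr do rewrite big_mkcondl.
rewrite exchange_big /=; apply: eq_bigr => g _.
rewrite sum_if_eq'.
have [->|/Hd dg] := eqVneq (mu x g) 0; first by case: ifP.
by rewrite dom_restr dg (setIidPl (subsetDl _ _)) eqxx.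
Qed.

Lemma marg_ge X (F : asg V -> R) G f0 : (forall f, 0 <= F f) -> restr X f0 == G ->
  F f0 <= marg X F G.
Proof.
move=> H0 e; rewrite /marg (bigD1 f0) //= lerDl sumr_ge0 //.
Qed.

Lemma case1_core X A u v :
  is_dist_on (B v) (mu v) -> (forall f, 0 <= mu u f) ->
  (forall G, marg (B v :&: B u) (mu v) G = marg (B v :&: B u) (mu u) G) ->
  good u A -> (forall y, y \in B v -> y \notin B u -> y \notin X) ->
  marg X (scStep B mu A u v) =1 marg X A.
Proof.
move=> Hdv Hu0 Hcons Hg Hdisj G.
rewrite marg_sum sum_scStep [RHS]marg_sum; apply: eq_bigr => h _.
have [->|Ah] := eqVneq (A h) 0; first by rewrite !mul0r.
congr (_ * _).
have E g : dom g == B v :\: B v :&: B u -> restr X (Defs.merge h g) = restr X h.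
  move=> /eqP dg; apply: restr_merge_disj => y; rewrite dg !inE => /andP[/negP yu yv].
  by apply: Hdisj => //; apply/negP => yu'; apply: yu; rewrite yv yu'.
under eq_bigr => g dg do rewrite (E g dg).
rewrite -mulr_suml condPr_sum1 ?mul1r ?subsetIl //.
rewrite Hcons; apply: lt0r_neq0.
have H1 : restr (B v :&: B u) (restr (B u) h) == restr (B v :&: B u) h.
  by rewrite restr_restr // subsetIr.
apply: (lt_le_trans _ (marg_ge Hu0 H1)).
by rewrite lt0r Hu0 andbT; apply: Hg.
Qed.

End Steps.

Ltac optcase y :=
  repeat match goal with
  | |- context [?g y] =>
      let t := constr:(g y : option bool) in case: (g y) => [[]|]
  end.

Section Case2.
Variables (R : realFieldType) (V N : finType).
Variables (B : N -> {set V}) (mu : N -> asg V -> R).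
Variables (u v w : N) (X : {set V}).
Local Notation mrg := (@Defs.merge V).
Local Notation S := (B v :&: B w).
Local Notation T := (B u :&: B v).
Local Notation M1 := (B v :\: S).
Local Notation M2 := (B u :\: T).
Local Notation M3 := (B u :\: S).
Hypothesis HSu : S \subset B u.
Hypothesis HX : forall y, y \in B v -> y \notin B w -> y \in X -> y \in B u.

Lemma FS_lem y : (y \in B v) && (y \in B w) ==> (y \in B u).
Proof. by apply/implyP => H; apply: (subsetP HSu); rewrite inE. Qed.
Lemma FX_lem y : (y \in B v) ==> ((y \notin B w) ==> ((y \in X) ==> (y \in B u))).
Proof. by apply/implyP => H1; apply/implyP => H2; apply/implyP => H3; apply: HX. Qed.

Ltac memcase y :=
  move: (FS_lem y) (FX_lem y); rewrite ?(restrE, mergeE, inE);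
  case: (y \in B u); case: (y \in B v); case: (y \in B w); case: (y \in X);
  optcase y.

Lemma domE (g : asg V) (M : {set V}) y : dom g = M -> (g y != None) = (y \in M).
Proof. by move=> <-; rewrite in_dom. Qed.

Lemma stepA (h g1 g2 : asg V) : dom g1 = M1 -> dom g2 = M2 ->
  restr X (mrg (mrg h g1) g2) = restr X (mrg h (mrg (restr T g1) g2)).
Proof.
move=> d1 d2; apply/ffunP => y; move: (domE y d1) (domE y d2).
by memcase y.
Qed.


Lemma stepT (h g1 : asg V) : restr T (mrg h g1) = restr T (mrg h (restr T g1)).
Proof. by apply/ffunP => y; memcase y. Qed.

Lemma kT (g1 g2 : asg V) : dom g2 = M2 -> restr T (mrg (restr T g1) g2) = restr T g1.
Proof. by move=> d2; apply/ffunP => y; move: (domE y d2); memcase y. Qed.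

Lemma kM2 (g1 g2 : asg V) : dom g1 = M1 -> dom g2 = M2 ->
  restr M2 (mrg (restr T g1) g2) = g2.
Proof.
by move=> d1 d2; apply/ffunP => y; move: (domE y d1) (domE y d2); memcase y.
Qed.

Lemma kdom (g1 g2 : asg V) : dom g1 = M1 -> dom g2 = M2 ->
  dom (mrg (restr T g1) g2) == M3.
Proof.
move=> d1 d2; rewrite eq_domE; apply/forallP => y.
by move: (domE y d1) (domE y d2); memcase y.
Qed.

Lemma kcond (g1 g2 g3 : asg V) : dom g1 = M1 -> dom g2 = M2 -> dom g3 = M3 ->
  (g2 == restr M2 g3) && (restr T g3 == restr T g1) = (g3 == mrg (restr T g1) g2).
Proof.
move=> d1 d2 d3; rewrite !eq_asgE !forall_andb; apply: eq_forallb => y.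
by move: (domE y d1) (domE y d2) (domE y d3); memcase y.
Qed.

Lemma domM2 (g3 : asg V) : dom g3 = M3 -> dom (restr M2 g3) == M2.
Proof.
move=> d3; rewrite eq_domE; apply/forallP => y.
by move: (domE y d3); memcase y.
Qed.

Lemma stepB (g1 : asg V) (F : asg V -> R) : dom g1 = M1 ->
  \sum_(g2 | dom g2 == M2) F (mrg (restr T g1) g2) =
  \sum_(g3 | dom g3 == M3) (if restr T g3 == restr T g1 then F g3 else 0).
Proof.
move=> d1.
transitivity (\sum_(g3 | dom g3 == M3) \sum_(g2 | dom g2 == M2)
   (if g2 == restr M2 g3 then (if restr T g3 == restr T g1 then F g3 else 0) else 0));
  last first.
  apply: eq_bigr => g3 /eqP d3; rewrite sum_if_eq domM2 //.
rewrite exchange_big /=; apply: eq_bigr => g2 /eqP d2.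
transitivity (\sum_(g3 | dom g3 == M3) (if g3 == mrg (restr T g1) g2 then F g3 else 0)).
  by rewrite sum_if_eq kdom.
apply: eq_bigr => g3 /eqP d3; rewrite -(kcond d1 d2 d3).
by case: (g2 == restr M2 g3); case: (restr T g3 == restr T g1).
Qed.


Hypothesis Hdv : forall f, mu v f != 0 -> dom f = B v.
Hypothesis Hu0 : forall f, 0 <= mu u f.
Hypothesis HcT : forall G, marg T (mu v) G = marg T (mu u) G.
Hypothesis HcS : forall G, marg S (mu v) G = marg S (mu u) G.

Lemma Wcond (h g g3 : asg V) : dom g = B v -> dom g3 = M3 ->
  (restr S g == restr S h) && (restr T (restr M1 g) == restr T g3) =
  (restr T g == restr T (mrg h (restr T g3))).
Proof.
move=> dg d3; rewrite !eq_asgE !forall_andb; apply: eq_forallb => y.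
by move: (domE y dg) (domE y d3); memcase y.
Qed.

Lemma Ncond (h g g3 : asg V) : dom g3 = M3 ->
  (restr M2 g == restr M2 g3) && (restr T g == restr T (mrg h (restr T g3))) =
  (restr M3 g == g3) && (restr S g == restr S h).
Proof.
move=> d3; rewrite !eq_asgE !forall_andb; apply: eq_forallb => y.
by move: (domE y d3); memcase y.
Qed.

Lemma Wsum (h g3 : asg V) : dom g3 = M3 ->
  \sum_(g1 | dom g1 == M1)
     (if restr T g1 == restr T g3 then condPr (mu v) S M1 (restr S h) g1 else 0) =
  marg T (mu v) (restr T (mrg h (restr T g3))) / marg S (mu v) (restr S h).
Proof.
move=> d3; rewrite /condPr /marg.
under eq_bigr do rewrite -if_mul.
rewrite -mulr_suml; congr (_ / _).
transitivity (\sum_(g1 | dom g1 == M1) \sum_(g | restr S g == restr S h)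
   (if restr M1 g == g1 then (if restr T g1 == restr T g3 then mu v g else 0) else 0)).
  apply: eq_bigr => g1 _; rewrite big_mkcondl /=; case: ifP => _.
    by apply: eq_bigr => g _; case: ifP.
  by rewrite big1 // => g _; case: ifP.
rewrite exchange_big /=.
under eq_bigr => g _ do rewrite sum_if_eq'.
rewrite [LHS]big_mkcond [RHS]big_mkcond; apply: eq_bigr => g _.
have [->|/Hdv dg] := eqVneq (mu v g) 0; first by repeat case: ifP.
rewrite dom_restr dg (setIidPl (subsetDl _ _)) eqxx -(Wcond h dg d3).
by case: (restr S g == restr S h); case: (restr T (restr M1 g) == restr T g3).
Qed.

Lemma stepD (h g3 : asg V) : dom g3 = M3 ->
  condPr (mu u) T M2 (restr T (mrg h (restr T g3))) (restr M2 g3) *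
  \sum_(g1 | dom g1 == M1)
     (if restr T g1 == restr T g3 then condPr (mu v) S M1 (restr S h) g1 else 0) =
  condPr (mu u) S M3 (restr S h) g3.
Proof.
move=> d3; rewrite Wsum // HcT HcS.
set r := restr T (mrg h (restr T g3)).
rewrite /condPr.
under eq_bigl => g do rewrite (Ncond h g d3).
rewrite -/(marg T (mu u) r) -/(marg S (mu u) (restr S h)).
set Nn := \sum_(g | _) mu u g.
have [DT0|DTn] := eqVneq (marg T (mu u) r) 0.
  suff -> : Nn = 0 by rewrite DT0 !mul0r.
  apply/eqP; rewrite eq_le; apply/andP; split; last by rewrite sumr_ge0.
  rewrite -DT0 /marg /Nn.
  under eq_bigl => g do rewrite -(Ncond h g d3).
  rewrite big_mkcondl /=; apply: ler_sum => g _; case: ifP => //.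
by rewrite mulrA divfK.
Qed.


Hypothesis HS : B u :&: B w = B v :&: B w.

Lemma case2_core (A : asg V -> R) :
  marg X (scStep B mu (scStep B mu A w v) v u) =1 marg X (scStep B mu A w u).
Proof.
move=> G; rewrite marg_sum sum_scStep sum_scStep [RHS]marg_sum sum_scStep HS.
apply: eq_bigr => h _; congr (_ * _).
pose F g3 := condPr (mu u) T M2 (restr T (mrg h (restr T g3))) (restr M2 g3) *
   (if restr X (mrg h g3) == G then 1 else 0).
transitivity (\sum_(g1 | dom g1 == M1) condPr (mu v) S M1 (restr S h) g1 *
   \sum_(g3 | dom g3 == M3) (if restr T g3 == restr T g1 then F g3 else 0)).
  apply: eq_bigr => g1 /eqP d1; congr (_ * _); rewrite -stepB //.
  apply: eq_bigr => g2 /eqP d2.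
  by rewrite /F kT // kM2 // -stepT stepA.
under eq_bigr do rewrite mulr_sumr.
rewrite exchange_big /=; apply: eq_bigr => g3 /eqP d3.
transitivity (F g3 * \sum_(g1 | dom g1 == M1)
     (if restr T g1 == restr T g3 then condPr (mu v) S M1 (restr S h) g1 else 0)).
  rewrite mulr_sumr; apply: eq_bigr => g1 _; rewrite eq_sym.
  by case: ifP; rewrite ?mulr0 // mulrC.
by rewrite /F mulrAC stepD.
Qed.

End Case2.

Section Lists.
Variables (N : finType).

Lemma rem_mid (a t : seq N) (p q : N) : q \notin a -> p != q ->
  rem q (a ++ p :: q :: t) = a ++ p :: t.
Proof.
elim: a => [|y a IH] /=; first by move=> _ /negbTE ->; rewrite eqxx.
by rewrite inE negb_or eq_sym => /andP[/negbTE -> qa] pq; rewrite IH.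
Qed.

Lemma nth_cat_add (d : N) (a s : seq N) i : nth d (a ++ s) (size a + i) = nth d s i.
Proof. by rewrite nth_cat ltnNge leq_addr /= addKn. Qed.

End Lists.

Section RI.
Variables (V N : finType) (B : N -> {set V}).

Lemma ri_facts (P a b : seq N) (p q r d : N) : P = a ++ [:: p; q; r] ++ b ->
  (forall (x : V) (i j k : nat), (i <= j <= k)%N -> (k < size P)%N ->
     x \in B (nth d P i) -> x \in B (nth d P k) -> x \in B (nth d P j)) ->
  [/\ forall y z, z \in a -> y \in B z -> y \in B q -> y \in B p,
      forall y z, z \in b -> y \in B z -> y \in B q -> y \in B r &
      forall y, y \in B p -> y \in B r -> y \in B q].
Proof.
move=> -> H.
have sP : size (a ++ [:: p; q; r] ++ b) = (size a + (3 + size b))%N by rewrite !size_cat.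
have Np : nth d (a ++ [:: p; q; r] ++ b) (size a + 0) = p by rewrite nth_cat_add.
have Nq : nth d (a ++ [:: p; q; r] ++ b) (size a + 1) = q by rewrite nth_cat_add.
have Nr : nth d (a ++ [:: p; q; r] ++ b) (size a + 2) = r by rewrite nth_cat_add.
split.
- move=> y z za yz yq.
  have Nz : nth d (a ++ [:: p; q; r] ++ b) (index z a) = z.
    by rewrite nth_cat index_mem za nth_index.
  rewrite -Np; apply: (H y (index z a) _ (size a + 1)%N).
  + by rewrite addn0 (ltnW (_ : index z a < size a)%N) ?index_mem // leq_addr.
  + by rewrite sP ltn_add2l.
  + by rewrite Nz.
  + by rewrite Nq.
- move=> y z zb yz yq.
  have Nz : nth d (a ++ [:: p; q; r] ++ b) (size a + (3 + index z b)) = z.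
    by rewrite nth_cat_add (nth_cat_add d [:: p; q; r]) nth_index.
  rewrite -Nr; apply: (H y (size a + 1)%N _ (size a + (3 + index z b))).
  + by rewrite !leq_add2l /= leq_addr.
  + by rewrite sP ltn_add2l ltn_add2l index_mem.
  + by rewrite Nq.
  + by rewrite Nz.
- move=> y yp yr.
  rewrite -Nq; apply: (H y (size a + 0)%N _ (size a + 2)%N).
  + by rewrite !leq_add2l.
  + by rewrite sP ltn_add2l.
  + by rewrite Np.
  + by rewrite Nr.
Qed.

End RI.

Section Fin.
Variables (R : realFieldType) (V N : finType).
Variables (B : N -> {set V}) (mu : N -> asg V -> R).

Lemma fin_lemma (X : {set V}) (s : seq N) (x0 : N) :
  (forall y, y \in x0 :: s -> B y \subset X) -> is_dist_on (B x0) (mu x0) ->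
  scRound B mu (x0 :: s) =1 marg X (scRound B mu (x0 :: s)).
Proof.
move=> H Hd G /=; rewrite marg_scRest; last by move=> y ys; apply: H; rewrite inE ys orbT.
rewrite (functional_extensionality _ _ (marg_dist Hd _)) //.
by apply: H; rewrite inE eqxx.
Qed.

End Fin.

Unset Implicit Arguments. Set Strict Implicit. Set Printing Implicit Defensive.

Theorem lemma3p7 (R : realFieldType) (V N : finType)
  (B : N -> {set V}) (mu : N -> asg V -> R)
  (P : seq N) (a b : seq N) (u v w : N) :
  uniq P ->
  (* running-intersection: nodes containing a vertex form a contiguous subpath *)
  (forall (x : V) (i j k : nat), (i <= j <= k)%N -> (k < size P)%N ->
     x \in B (nth v P i) -> x \in B (nth v P k) -> x \in B (nth v P j)) ->
  (forall x, x \in P -> is_dist_on (B x) (mu x)) ->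
  (forall x y, x \in P -> y \in P -> forall g,
     marg (B x :&: B y) (mu x) g = marg (B x :&: B y) (mu y) g) ->
  (P = a ++ [:: u; v; w] ++ b \/ P = a ++ [:: w; v; u] ++ b) ->
  a != [::] -> b != [::] ->
  B v :&: B w \subset B u ->
  forall g : asg V,
    scRound B mu (rem v P) g =
    marg (\bigcup_(x <- rem v P) B x) (scRound B mu P) g.
Proof.
move=> Hu Hri Hd Hc HP Ha Hb Hsub g.
case: a Ha HP => // x0 a1 _ HP.
set X := \bigcup_(x <- rem v P) B x.
have HXs y : y \in rem v P -> B y \subset X.
  by move=> yP; rewrite /X bigcup_seq; apply: bigcup_sup.
have HXm y : y \in X -> exists2 z, z \in rem v P & y \in B z.
  by rewrite /X bigcup_seq => /bigcupP[z zP yz]; exists z.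
have Hfin : forall s, rem v P = x0 :: s -> forall G,
    scRound B mu (rem v P) G = marg X (scRound B mu (rem v P)) G.
  move=> s Es G; rewrite Es; apply: fin_lemma; last first.
    by apply: Hd; apply: (mem_rem (x := v)); rewrite Es inE eqxx.
  by move=> y; rewrite -Es; apply: HXs.
case: HP => HP.
-
  have [F1a F1b F1c] := ri_facts (B := B) HP Hri.
  have Hu' : uniq P by [].
  move: Hu'; rewrite {1}HP cat_uniq => /and3P[_ Hhas Hu2].
  have va : v \notin x0 :: a1.
    by apply: contra Hhas => va; apply/hasP; exists v; rewrite // !inE eqxx orbT.
  have uv : u != v by move: Hu2 => /= /andP[]; rewrite inE negb_or => /andP[].
  have HP' : rem v P = (x0 :: a1) ++ [:: u; w] ++ b by rewrite HP rem_mid.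
  have inP y : y \in [:: u; v; w] -> y \in P.
    by move=> yP; rewrite HP mem_cat; apply/orP; right; rewrite mem_cat yP.
  have uP : u \in P by apply: inP; rewrite !inE eqxx.
  have vP : v \in P by apply: inP; rewrite !inE eqxx orbT.
  have wP : w \in P by apply: inP; rewrite !inE eqxx !orbT.
  have wX : B w \subset X by apply: HXs; rewrite HP' mem_cat !inE eqxx !orbT.
  have bX y : y \in b -> B y \subset X.
    by move=> yb; apply: HXs; rewrite HP' mem_cat !inE yb !orbT.
  have Hdisj y : y \in B v -> y \notin B u -> y \notin X.
    move=> yv yu; apply/negP => /HXm[z]; rewrite HP' mem_cat => /orP[za yz|].
      by move: yu; rewrite (F1a y z za yz yv).
    rewrite /= !inE => /orP[/eqP->|/orP[/eqP->|zb]] yz.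
    + by move: yu; rewrite yz.
    + by move: yu; rewrite (subsetP Hsub) // inE yv yz.
    + by move: yu; rewrite (subsetP Hsub) // inE yv (F1b y z zb yz yv).
  have F2 : B w :&: B v = B w :&: B u.
    apply/setP => y; rewrite !inE; apply/andP/andP => [[yw yv]|[yw yu]]; split => //.
      by apply: (subsetP Hsub); rewrite inE yv yw.
    by apply: F1c.
  set A0 := scRest B mu (mu x0) x0 a1.
  set p0 := last x0 a1.
  set Au := scStep B mu A0 p0 u.
  have E : scRound B mu P = scRest B mu (scStep B mu (scStep B mu Au u v) v w) w b.
    by rewrite HP /= scRest_cat.
  have E' : scRound B mu (rem v P) = scRest B mu (scStep B mu Au u w) w b.
    by rewrite HP' /= scRest_cat.
  rewrite (Hfin (a1 ++ [:: u; w] ++ b)) // E E' !marg_scRest //.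
  have [Hu0 _ _] := Hd u uP.
  have C1 := case1_core (A := Au) (Hd v vP) Hu0 (Hc v u vP uP) (good_step (A:=A0) (p:=p0) (Hd u uP)) Hdisj.
  have -> : marg X (scStep B mu (scStep B mu Au u v) v w) = marg X (scStep B mu Au u w).
    apply: functional_extensionality => G.
    rewrite !marg_scStep // (functional_extensionality _ _ C1).
    by rewrite /scStep F2.
  by [].
-
  have [F2a F2b F2c] := ri_facts (B := B) HP Hri.
  have Hu' : uniq P by [].
  move: Hu'; rewrite {1}HP cat_uniq => /and3P[_ Hhas Hu2].
  have va : v \notin x0 :: a1.
    by apply: contra Hhas => va; apply/hasP; exists v; rewrite // !inE eqxx orbT.
  have wv : w != v by move: Hu2 => /= /andP[]; rewrite inE negb_or => /andP[].
  have HP' : rem v P = (x0 :: a1) ++ [:: w; u] ++ b by rewrite HP rem_mid.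
  have inP y : y \in [:: w; v; u] -> y \in P.
    by move=> yP; rewrite HP mem_cat; apply/orP; right; rewrite mem_cat yP.
  have uP : u \in P by apply: inP; rewrite !inE eqxx !orbT.
  have vP : v \in P by apply: inP; rewrite !inE eqxx orbT.
  have wP : w \in P by apply: inP; rewrite !inE eqxx.
  have bX y : y \in b -> B y \subset X.
    by move=> yb; apply: HXs; rewrite HP' mem_cat !inE yb !orbT.
  have HX y : y \in B v -> y \notin B w -> y \in X -> y \in B u.
    move=> yv yw /HXm[z]; rewrite HP' mem_cat => /orP[za yz|].
      by move: yw; rewrite (F2a y z za yz yv).
    rewrite /= !inE => /orP[/eqP->|/orP[/eqP->|zb]] yz //.
    + by move: yw; rewrite yz.
    + by apply: (F2b y z zb yz yv).
  have HS : B u :&: B w = B v :&: B w.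
    apply/setP => y; rewrite !inE; apply/andP/andP => [[yu yw]|[yv yw]]; split => //.
      by apply: F2c.
    by apply: (subsetP Hsub); rewrite inE yv yw.
  have HcT G : marg (B u :&: B v) (mu v) G = marg (B u :&: B v) (mu u) G.
    by rewrite setIC (Hc v u vP uP).
  have HcS G : marg (B v :&: B w) (mu v) G = marg (B v :&: B w) (mu u) G.
    by rewrite (Hc v w vP wP) -HS (Hc u w uP wP).
  have [Hu0 _ _] := Hd u uP.
  have [_ _ Hdv] := Hd v vP.
  set A0 := scRest B mu (mu x0) x0 a1.
  set p0 := last x0 a1.
  set Aw := scStep B mu A0 p0 w.
  have E : scRound B mu P = scRest B mu (scStep B mu (scStep B mu Aw w v) v u) u b.
    by rewrite HP /= scRest_cat.
  have E' : scRound B mu (rem v P) = scRest B mu (scStep B mu Aw w u) u b.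
    by rewrite HP' /= scRest_cat.
  rewrite (Hfin (a1 ++ [:: w; u] ++ b)) // E E' !marg_scRest //.
  by rewrite (functional_extensionality _ _ (case2_core Hsub HX Hdv Hu0 HcT HcS HS Aw)).
Qed.
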